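(* Let $\Lambda=\{(V_i,\Lambda_i,v_i)\}_{i\in I}$, $\Lambda'=\{(V_i',\Lambda_i',v_i')\}_{i\in I}$ be g-fusion Bessel sequences in $H$ and $\Gamma=\{(W_j,\Gamma_j,w_j)\}_{j\in J}$, $\Gamma'=\{(W_j',\Gamma_j',w_j')\}_{j\in J}$ be g-fusion Bessel sequences in $K$, and let $S_{\Lambda\Lambda'}$ and $S_{\Gamma\Gamma'}$ be the frame operators for the pairs $(\Lambda,\Lambda')$ and $(\Gamma,\Gamma')$. Let $S$ be the frame operator for the pair of g-fusion Bessel sequences $\Lambda\otimes\Gamma=\{(V_i\otimes W_j,\Lambda_i\otimes\Gamma_j,v_iw_j)\}_{i,j}$ and $\Lambda'\otimes\Gamma'=\{(V_i'\otimes W_j',\Lambda_i'\otimes\Gamma_j',v_i'w_j')\}_{i,j}$ in $H\otimes K$. Then $S=S_{\Lambda\Lambda'}\otimes S_{\Gamma\Gamma'}$.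
   Context: $H,K$ separable Hilbert spaces, $I,J\subseteq\mathbb{Z}$, $\{H_i\}$, $\{K_j\}$ Hilbert spaces; $V_i,V_i'\subseteq H$, $W_j,W_j'\subseteq K$ closed subspaces; $\Lambda_i,\Lambda_i'\in\mathcal{B}(H,H_i)$, $\Gamma_j,\Gamma_j'\in\mathcal{B}(K,K_j)$; all weights positive. $P_V$ is the orthogonal projection onto $V$. A family $\{(V_i,\Lambda_i,v_i)\}$ is a g-fusion Bessel sequence in $H$ if $\sum_iv_i^2\|\Lambda_iP_{V_i}f\|^2\le B\|f\|^2$ for all $f\in H$, some $B$. The frame operator for the pair $(\Lambda,\Lambda')$ is $S_{\Lambda\Lambda'}f=\sum_iv_iv_i'P_{V_i}\Lambda_i^*\Lambda_i'P_{V_i'}f$ (and analogously $S_{\Gamma\Gamma'}$). $H\otimes K$ is the Hilbert tensor product; $Q\otimes T$ is the bounded operator with $(Q\otimes T)(f\otimes g)=Qf\otimes Tg$; $P_{V\otimes W}=P_V\otimes P_W$. The frame operator for the pair $(\Lambda\otimes\Gamma,\Lambda'\otimes\Gamma')$ is $S(f\otimes g)=\sum_{i,j}v_iw_jv_i'w_j'P_{V_i\otimes W_j}(\Lambda_i\otimes\Gamma_j)^*(\Lambda_i'\otimes\Gamma_j')P_{V_i'\otimes W_j'}(f\otimes g)$ for $f\otimes g\in H\otimes K$. *)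

(* Defs.v *)
From mathcomp Require Import all_boot all_order all_algebra.
From mathcomp Require Import complex reals.
Set Implicit Arguments. Unset Strict Implicit. Unset Printing Implicit Defensive.
Import Order.TTheory GRing.Theory Num.Theory.
Local Open Scope ring_scope.
Local Open Scope complex_scope.

Section Inner.
Variable R : realType.
Variable V : lmodType R[i].
Variable ip : V -> V -> R[i].

Definition is_inner : Prop :=
  [/\ (forall (a : R[i]) (x y z : V), ip (a *: x + y) z = a * ip x z + ip y z),
      (forall x y : V, ip y x = conjc (ip x y)),
      (forall x : V, 0 <= ip x x) &
      (forall x : V, ip x x = 0 -> x = 0)].

Definition ipnorm (x : V) : R[i] := sqrtC (ip x x).

Definition ip_complete : Prop :=
  forall u : nat -> V,
    (forall e : R[i], 0 < e -> exists N : nat, forall m n : nat,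
        (N <= m)%N -> (N <= n)%N -> ipnorm (u m - u n) < e) ->
    exists l : V, forall e : R[i], 0 < e -> exists N : nat, forall n : nat,
        (N <= n)%N -> ipnorm (u n - l) < e.
End Inner.

Record Hilbert (R : realType) := MkHilbert {
  hsort :> lmodType R[i];
  hip : hsort -> hsort -> R[i];
  hip_inner : is_inner hip;
  hip_complete : ip_complete hip }.

Section HilbertDefs.
Variable R : realType.

Definition hnorm (H : Hilbert R) (x : H) : R[i] := ipnorm (@hip R H) x.

Definition separable (H : Hilbert R) : Prop :=
  exists d : nat -> H, forall (x : H) (e : R[i]), 0 < e ->
    exists n : nat, hnorm (x - d n) < e.

Definition bounded_linear (H1 H2 : Hilbert R) (A : H1 -> H2) : Prop :=
  (forall (a : R[i]) (x y : H1), A (a *: x + y) = a *: A x + A y) /\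
  exists B : R[i], 0 <= B /\ forall x : H1, hnorm (A x) <= B * hnorm x.

Definition is_adjoint (H1 H2 : Hilbert R) (A : H1 -> H2) (Astar : H2 -> H1) : Prop :=
  forall (x : H1) (y : H2), hip (A x) y = hip x (Astar y).

Definition closed_subspace (H : Hilbert R) (V : H -> Prop) : Prop :=
  [/\ V 0,
      (forall (a : R[i]) (x y : H), V x -> V y -> V (a *: x + y)) &
      (forall (x : H), (forall e : R[i], 0 < e -> exists y, V y /\ hnorm (x - y) < e) -> V x)].

Definition is_orth_proj (H : Hilbert R) (V : H -> Prop) (P : H -> H) : Prop :=
  forall x : H, V (P x) /\ forall y : H, V y -> hip (x - P x) y = 0.

(* unconditional convergence of a series indexed by a set A of indices:
   the net of finite partial sums over finite subsets of A converges to s *)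
Definition has_usum (I : eqType) (H : Hilbert R) (A : I -> Prop) (F : I -> H) (s : H) : Prop :=
  forall e : R[i], 0 < e ->
    exists s0 : seq I, uniq s0 /\ (forall k, k \in s0 -> A k) /\
      forall s1 : seq I, uniq s1 -> (forall k, k \in s1 -> A k) ->
        {subset s0 <= s1} -> hnorm (\sum_(k <- s1) F k - s) < e.

(* g-fusion Bessel sequence {(V_i, L_i, v_i)}_{i in I}:
   sum_i v_i^2 ||L_i P_{V_i} f||^2 <= B ||f||^2, i.e. all finite partial sums of
   this nonnegative series are bounded by B ||f||^2. *)
Definition gfusion_bessel (I : int -> Prop) (H : Hilbert R) (Hi : int -> Hilbert R)
    (PV : int -> H -> H) (L : forall i : int, H -> Hi i) (v : int -> R) : Prop :=
  exists B : R[i], 0 < B /\ forall f : H, forall s : seq int, uniq s ->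
    (forall k, k \in s -> I k) ->
    \sum_(i <- s) ((v i) ^+ 2)%:C * (hnorm (L i (PV i f))) ^+ 2 <= B * (hnorm f) ^+ 2.

Definition is_tensor (H K T : Hilbert R) (tens : H -> K -> T) : Prop :=
  [/\ (forall (a : R[i]) (f f' : H) (g : K), tens (a *: f + f') g = a *: tens f g + tens f' g),
      (forall (a : R[i]) (f : H) (g g' : K), tens f (a *: g + g') = a *: tens f g + tens f g'),
      (forall (f f' : H) (g g' : K), hip (tens f g) (tens f' g') = hip f f' * hip g g') &
      (forall (t : T) (e : R[i]), 0 < e -> exists s : seq (R[i] * (H * K)),
          hnorm (t - \sum_(p <- s) p.1 *: tens p.2.1 p.2.2) < e)].

Definition is_op_tensor (H1 K1 T1 H2 K2 T2 : Hilbert R)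
    (tens1 : H1 -> K1 -> T1) (tens2 : H2 -> K2 -> T2)
    (Q : H1 -> H2) (Tt : K1 -> K2) (X : T1 -> T2) : Prop :=
  bounded_linear X /\ forall (f : H1) (g : K1), X (tens1 f g) = tens2 (Q f) (Tt g).
End HilbertDefs.

(* Main.v *)
Require Import Defs.
From mathcomp Require Import all_boot all_order all_algebra.
From mathcomp Require Import complex reals.
From mathcomp Require Import classical_sets boolp.
From mathcomp Require Import ring lra.
Set Implicit Arguments. Unset Strict Implicit. Unset Printing Implicit Defensive.
Import Order.TTheory GRing.Theory Num.Theory.
Local Open Scope ring_scope.
Local Open Scope complex_scope.

Section Basic.
Variable R : realType.
Variable H : Hilbert R.
Local Notation ip := (@hip R H).

Definition nq (x : H) : R := complex.Re (ip x x).

Lemma ipax : forall (a : R[i]) (x y z : H), ip (a *: x + y) z = a * ip x z + ip y z.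
Proof. by case: (hip_inner H). Qed.
Lemma ipC (x y : H) : ip y x = (ip x y)^*.
Proof. by case: (hip_inner H) => _ h _ _; apply: h. Qed.
Lemma ip_ge0 (x : H) : 0 <= ip x x.
Proof. by case: (hip_inner H). Qed.
Lemma ip_eq0 (x : H) : ip x x = 0 -> x = 0.
Proof. by case: (hip_inner H) => _ _ _; apply. Qed.

Lemma ip0l (z : H) : ip 0 z = 0.
Proof.
have := ipax 1 0 0 z; rewrite scaler0 addr0 mul1r => h.
by apply: (addrI (ip 0 z)); rewrite addr0 -h.
Qed.
Lemma ipDl (x y z : H) : ip (x + y) z = ip x z + ip y z.
Proof. by rewrite -[x]scale1r ipax mul1r scale1r. Qed.
Lemma ipZl a (x z : H) : ip (a *: x) z = a * ip x z.
Proof. by rewrite -[a *: x]addr0 ipax ip0l addr0. Qed.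
Lemma ipNl (x z : H) : ip (- x) z = - ip x z.
Proof. by rewrite -scaleN1r ipZl mulN1r. Qed.
Lemma ipBl (x y z : H) : ip (x - y) z = ip x z - ip y z.
Proof. by rewrite ipDl ipNl. Qed.
Lemma ip0r (z : H) : ip z 0 = 0.
Proof. by rewrite ipC ip0l rmorph0. Qed.
Lemma ipDr (x y z : H) : ip z (x + y) = ip z x + ip z y.
Proof. by rewrite ipC ipDl rmorphD; congr (_ + _); apply/esym/ipC. Qed.
Lemma ipZr a (x z : H) : ip z (a *: x) = a^* * ip z x.
Proof. by rewrite ipC ipZl rmorphM; congr (_ * _); apply/esym/ipC. Qed.
Lemma ipZrR (c : R) (x z : H) : ip z (c%:C *: x) = c%:C * ip z x.
Proof. by rewrite ipZr; congr (_ * _); exact: conjc_real. Qed.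
Lemma ipNr (x z : H) : ip z (- x) = - ip z x.
Proof. by rewrite ipC ipNl rmorphN; congr (- _); apply/esym/ipC. Qed.
Lemma ipBr (x y z : H) : ip z (x - y) = ip z x - ip z y.
Proof. by rewrite ipDr ipNr. Qed.
Lemma ip_suml (I : Type) (s : seq I) (F : I -> H) z :
  ip (\sum_(k <- s) F k) z = \sum_(k <- s) ip (F k) z.
Proof.
elim: s => [|k s IH]; first by rewrite !big_nil ip0l.
by rewrite !big_cons ipDl IH.
Qed.
Lemma ip_sumr (I : Type) (s : seq I) (F : I -> H) z :
  ip z (\sum_(k <- s) F k) = \sum_(k <- s) ip z (F k).
Proof.
elim: s => [|k s IH]; first by rewrite !big_nil ip0r.
by rewrite !big_cons ipDr IH.
Qed.

Lemma ipxx (x : H) : ip x x = (nq x)%:C.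
Proof.
have := ip_ge0 x; rewrite lecE /nq.
by case: (ip x x) => a b /= /andP[/eqP -> _].
Qed.
Lemma nq_ge0 (x : H) : 0 <= nq x.
Proof. by have := ip_ge0 x; rewrite ipxx lecR. Qed.
Lemma nq_eq0 (x : H) : nq x = 0 -> x = 0.
Proof. by move=> h; apply: ip_eq0; rewrite ipxx h. Qed.

Lemma conjR (x : R) : (x%:C)^* = x%:C :> R[i].
Proof. exact: conjc_real. Qed.

Lemma ReC (x y : H) : complex.Re (ip y x) = complex.Re (ip x y).
Proof. by rewrite ipC; case: (ip x y). Qed.

Lemma nqD (x y : H) : nq (x + y) = nq x + nq y + 2 * complex.Re (ip x y).
Proof.
rewrite /nq ipDl !ipDr !raddfD /= (ReC x y); ring.
Qed.
Lemma nqN (x : H) : nq (- x) = nq x.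
Proof. by rewrite /nq ipNl ipNr opprK. Qed.
Lemma nqZ (c : R[i]) (x : H) : nq (c *: x) = complex.Re (c * c^*) * nq x.
Proof.
rewrite /nq ipZl ipZr ipxx mulrA.
have : 0 <= c * c^* by exact: mulcJ_ge0.
rewrite lecE; case: (c * c^*) => a b /= /andP[/eqP -> _].
by move=> /=; ring.
Qed.
Lemma nqZr (c : R) (x : H) : nq (c%:C *: x) = c ^+ 2 * nq x.
Proof. by rewrite nqZ /=; ring. Qed.

Lemma Re_ip_le (x y : H) : 2 * complex.Re (ip x y) <= nq x + nq y.
Proof.
have := nq_ge0 (x - y); rewrite nqD nqN ipNr raddfN /=.
move=> h; lra.
Qed.
Lemma Re_ip_le_t (t : R) (x y : H) : 0 < t ->
  2 * complex.Re (ip x y) <= t * nq x + nq y / t.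
Proof.
move=> t0; have := Re_ip_le (t%:C *: x) y.
rewrite ipZl nqZr /=.
have -> : t * nq x + nq y / t = (t^+2 * nq x + nq y) / t.
  by field; rewrite gt_eqF.
rewrite ler_pdivlMr //.
case: (ip x y) => a b /= h.
have -> : 2 * a * t = 2 * (t * a - 0 * b) by ring.
done.
Qed.

Lemma nq_add_le (x y : H) : nq (x + y) <= 2 * nq x + 2 * nq y.
Proof. have := Re_ip_le x y; rewrite nqD; lra. Qed.

End Basic.

Section GS.
Variable R : realType.
Variable K : Hilbert R.
Local Notation ip := (@hip R K).

Definition orthonormal n (f : nat -> K) :=
  forall m l, (m < n)%N -> (l < n)%N -> ip (f m) (f l) = (m == l)%:R.

Lemma sum_delta n (F : nat -> R[i]) m : (m < n)%N ->
  \sum_(0 <= k < n) (m == k)%:R * F k = F m.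
Proof.
move=> hm; rewrite (bigD1_seq m) /=; last first.
- exact: iota_uniq.
- by rewrite mem_index_iota.
rewrite eqxx mul1r big1 ?addr0 // => k /negbTE; rewrite eq_sym => ->; by rewrite mul0r.
Qed.

Lemma sum_delta' n (F : nat -> R[i]) m : (m < n)%N ->
  \sum_(0 <= k < n) F k * (k == m)%:R = F m.
Proof.
move=> hm; rewrite -(sum_delta F hm); apply: eq_bigr => k _.
by rewrite mulrC eq_sym.
Qed.

Lemma parseval n f (al be : nat -> R[i]) : orthonormal n f ->
  ip (\sum_(0 <= m < n) al m *: f m) (\sum_(0 <= l < n) be l *: f l)
  = \sum_(0 <= m < n) al m * (be m)^*.
Proof.
move=> hf; rewrite ip_suml; apply: eq_big_nat => m /andP[_ hm].
rewrite ipZl ip_sumr; congr (_ * _).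
rewrite (eq_big_nat _ _ (F2 := fun l => (be l)^* * (l == m)%:R)).
  by rewrite sum_delta'.
by move=> l /andP[_ hl]; rewrite ipZr hf // eq_sym.
Qed.

Lemma GS (ys : seq K) : exists n (f : nat -> K), orthonormal n f /\
  forall y, y \in ys -> y = \sum_(0 <= m < n) ip y (f m) *: f m.
Proof.
elim: ys => [|y ys [n [f [hf hr]]]]; first by exists 0%N, (fun _ => 0).
pose r := y - \sum_(0 <= m < n) ip y (f m) *: f m.
have rperp : forall m, (m < n)%N -> ip (f m) r = 0.
  move=> m hm; rewrite /r ipBr ip_sumr.
  rewrite (eq_big_nat _ _ (F2 := fun k => (m == k)%:R * (ip y (f k))^*)).
    by rewrite sum_delta // ipC subrr.
  by move=> k /andP[_ hk]; rewrite ipZr hf // mulrC.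
have hsum0 : forall (c : nat -> R[i]), ip (\sum_(0 <= m < n) c m *: f m) r = 0.
  move=> c; rewrite ip_suml (eq_big_nat _ _ (F2 := fun _ => 0)) ?big1_eq //.
  by move=> m /andP[_ hm]; rewrite ipZl rperp ?mulr0.
case: (eqVneq r 0) => [r0|rn0].
  exists n, f; split => // z; rewrite in_cons => /orP[/eqP ->|hz]; last exact: hr.
  by move/eqP: r0; rewrite /r subr_eq0 => /eqP.
have nqr : 0 < nq r.
  rewrite lt_def nq_ge0 andbT; apply/eqP => /nq_eq0 h; by rewrite h eqxx in rn0.
pose sr := Num.sqrt (nq r).
have sr0 : 0 < sr by rewrite sqrtr_gt0.
have sr2 : sr ^+ 2 = nq r by rewrite sqr_sqrtr // ltW.
pose e := (sr^-1)%:C *: r.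
have ee : ip e e = 1.
  by rewrite ipxx /e nqZr -sr2 exprVn mulVf // expf_eq0 (gt_eqF sr0) andbF.
have fe : forall m, (m < n)%N -> ip (f m) e = 0.
  by move=> m hm; rewrite ipZr rperp // mulr0.
have ef : forall m, (m < n)%N -> ip e (f m) = 0.
  by move=> m hm; rewrite ipC fe // rmorph0.
exists n.+1, (fun m => if m == n then e else f m); split.
  move=> m l; rewrite !ltnS => hm hl.
  case: (eqVneq m n) => [mn|mn]; case: (eqVneq l n) => [ln|ln].
  - by rewrite ee mn ln eqxx.
  - rewrite ef; last by rewrite ltn_neqAle ln hl.
    by rewrite mn eq_sym (negbTE ln).
  - rewrite fe; last by rewrite ltn_neqAle mn hm.
    by rewrite ln (negbTE mn).
  - by rewrite hf // ltn_neqAle ?mn ?ln ?hm ?hl.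
move=> z; rewrite big_nat_recr //= eqxx.
rewrite (eq_big_nat _ _ (F2 := fun m => ip z (f m) *: f m)); last first.
  by move=> m /andP[_ hm]; rewrite ltn_eqF.
rewrite in_cons => /orP[/eqP ->|hz].
  have -> : ip y e = sr%:C.
    rewrite ipZrR.
    have -> : y = r + \sum_(0 <= m < n) ip y (f m) *: f m by rewrite /r subrK.
    rewrite ipDl hsum0 addr0 ipxx -sr2 -rmorphM; congr (_%:C).
    by rewrite expr2 mulrA mulVf ?mul1r // gt_eqF.
  rewrite /e scalerA -rmorphM mulfV ?gt_eqF // scale1r.
  by rewrite /r addrC subrK.
have -> : ip z e = 0.
  by rewrite ipZrR (hr z hz) hsum0 mulr0.
by rewrite scale0r addr0; exact: hr.
Qed.
End GS.

Section Synth.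
Variable R : realType.

Lemma Re_sum (I : Type) (s : seq I) (F : I -> R[i]) :
  complex.Re (\sum_(k <- s) F k) = \sum_(k <- s) complex.Re (F k).
Proof.
elim: s => [|k s IH]; first by rewrite !big_nil.
by rewrite !big_cons -IH; case: (F k); case: (\sum_(j <- s) F j).
Qed.

Lemma ler_sum_seq' (I : eqType) (r : seq I) (F G : I -> R) :
  (forall i, i \in r -> F i <= G i) -> \sum_(i <- r) F i <= \sum_(i <- r) G i.
Proof.
move=> h; rewrite big_seq_cond [X in _ <= X]big_seq_cond.
by apply: ler_sum => i /andP[hi _]; exact: h.
Qed.

Lemma synth (H : Hilbert R) (Hi : int -> Hilbert R) (a : int -> H)
  (u : forall i, Hi i) (Tm : forall i, H -> Hi i) (Bt : R) (s : seq int) :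
  0 < Bt ->
  (forall i, i \in s -> forall x, hip (a i) x = hip (u i) (Tm i x)) ->
  (forall x, \sum_(i <- s) nq (Tm i x) <= Bt * nq x) ->
  nq (\sum_(i <- s) a i) <= Bt * \sum_(i <- s) nq (u i).
Proof.
move=> B0 hadj hbes.
suff: forall w, w = \sum_(i <- s) a i -> nq w <= Bt * \sum_(i <- s) nq (u i) by apply.
move=> w ew.
have e1 : nq w = \sum_(i <- s) complex.Re (hip (u i) (Tm i w)).
  rewrite /nq {1}ew ip_suml Re_sum; apply: eq_big_seq => i hi; by rewrite hadj.
have h1 : 2 * nq w <= \sum_(i <- s) (Bt * nq (u i) + nq (Tm i w) / Bt).
  rewrite e1 mulr_sumr; apply: ler_sum => i _; exact: Re_ip_le_t.
move: h1; rewrite big_split /= -mulr_sumr -mulr_suml => h1.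
have h2 : (\sum_(i <- s) nq (Tm i w)) / Bt <= nq w.
  by rewrite ler_pdivrMr // mulrC; exact: hbes.
lra.
Qed.
End Synth.

Section Tensor.
Variable R : realType.
Variables H K T : Hilbert R.
Variable tens : H -> K -> T.
Hypothesis hT : is_tensor tens.

Lemma tensAl (a : R[i]) f f' g : tens (a *: f + f') g = a *: tens f g + tens f' g.
Proof. by case: hT. Qed.
Lemma tensAr (a : R[i]) f g g' : tens f (a *: g + g') = a *: tens f g + tens f g'.
Proof. by case: hT. Qed.
Lemma tens_ip f f' g g' : hip (tens f g) (tens f' g') = hip f f' * hip g g'.
Proof. by case: hT. Qed.
Lemma tens0l g : tens 0 g = 0.
Proof.
have := tensAl 1 0 0 g; rewrite scaler0 addr0 scale1r => h.
by apply: (addrI (tens 0 g)); rewrite addr0 -h.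
Qed.
Lemma tens0r f : tens f 0 = 0.
Proof.
have := tensAr 1 f 0 0; rewrite scaler0 addr0 scale1r => h.
by apply: (addrI (tens f 0)); rewrite addr0 -h.
Qed.
Lemma tensDl f f' g : tens (f + f') g = tens f g + tens f' g.
Proof. by rewrite -[f]scale1r tensAl !scale1r. Qed.
Lemma tensDr f g g' : tens f (g + g') = tens f g + tens f g'.
Proof. by rewrite -[g]scale1r tensAr !scale1r. Qed.
Lemma tensZl a f g : tens (a *: f) g = a *: tens f g.
Proof. by rewrite -[a *: f]addr0 tensAl tens0l addr0. Qed.
Lemma tensZr a f g : tens f (a *: g) = a *: tens f g.
Proof. by rewrite -[a *: g]addr0 tensAr tens0r addr0. Qed.
Lemma tensBl f f' g : tens (f - f') g = tens f g - tens f' g.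
Proof. by rewrite tensDl -scaleN1r tensZl scaleN1r. Qed.
Lemma tensBr f g g' : tens f (g - g') = tens f g - tens f g'.
Proof. by rewrite tensDr -scaleN1r tensZr scaleN1r. Qed.
Lemma tens_suml (I : Type) (s : seq I) (F : I -> H) g :
  tens (\sum_(k <- s) F k) g = \sum_(k <- s) tens (F k) g.
Proof.
elim: s => [|k s IH]; first by rewrite !big_nil tens0l.
by rewrite !big_cons tensDl IH.
Qed.
Lemma tens_sumr (I : Type) (s : seq I) (F : I -> K) f :
  tens f (\sum_(k <- s) F k) = \sum_(k <- s) tens f (F k).
Proof.
elim: s => [|k s IH]; first by rewrite !big_nil tens0r.
by rewrite !big_cons tensDr IH.
Qed.
Lemma nq_tens f g : nq (tens f g) = nq f * nq g.
Proof. by rewrite /nq tens_ip !ipxx -rmorphM. Qed.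

Lemma tens_parseval n (f : nat -> K) (x x' : nat -> H) : orthonormal n f ->
  hip (\sum_(0 <= m < n) tens (x m) (f m)) (\sum_(0 <= l < n) tens (x' l) (f l))
  = \sum_(0 <= m < n) hip (x m) (x' m).
Proof.
move=> hf; rewrite ip_suml; apply: eq_big_nat => m /andP[_ hm].
rewrite ip_sumr.
rewrite (eq_big_nat _ _ (F2 := fun l => hip (x m) (x' l) * (l == m)%:R)).
  by rewrite sum_delta'.
by move=> l /andP[_ hl]; rewrite tens_ip hf // eq_sym.
Qed.

Lemma key (Hi : int -> Hilbert R) (a : int -> H) (y : int -> K)
  (u : forall i, Hi i) (Tm : forall i, H -> Hi i) (Bt M : R) (s : seq int) :
  0 < Bt ->
  (forall i, i \in s -> forall x, hip (a i) x = hip (u i) (Tm i x)) ->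
  (forall x, \sum_(i <- s) nq (Tm i x) <= Bt * nq x) ->
  (forall i, i \in s -> nq (y i) <= M) ->
  nq (\sum_(i <- s) tens (a i) (y i)) <= Bt * M * \sum_(i <- s) nq (u i).
Proof.
move=> B0 hadj hbes hM.
have [n [f [hf hr]]] := GS [seq y i | i <- s].
pose C i m := hip (y i) (f m).
have hy : forall i, i \in s -> y i = \sum_(0 <= m < n) C i m *: f m.
  by move=> i hi; apply: hr; exact: map_f.
pose x m := \sum_(i <- s) C i m *: a i.
have hw : \sum_(i <- s) tens (a i) (y i) = \sum_(0 <= m < n) tens (x m) (f m).
  transitivity (\sum_(i <- s) \sum_(0 <= m < n) C i m *: tens (a i) (f m)).
    apply: eq_big_seq => i hi; rewrite {1}(hy i hi) tens_sumr.
    by apply: eq_bigr => m _; rewrite tensZr.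
  rewrite exchange_big; apply: eq_bigr => m _.
  by rewrite tens_suml; apply: eq_bigr => i _; rewrite tensZl.
rewrite hw.
have hnw : nq (\sum_(0 <= m < n) tens (x m) (f m)) = \sum_(0 <= m < n) nq (x m).
  by rewrite {1}/nq tens_parseval // Re_sum.
rewrite hnw.
have hxm : forall m, nq (x m) =
    \sum_(i <- s) complex.Re (hip (C i m *: u i) (Tm i (x m))).
  move=> m; rewrite {1}/nq {1}/x ip_suml Re_sum.
  by apply: eq_big_seq => i hi; rewrite ipZl hadj // -ipZl.
have h1 : forall m, 2 * nq (x m) <=
    \sum_(i <- s) (Bt * nq (C i m *: u i) + nq (Tm i (x m)) / Bt).
  move=> m; rewrite hxm mulr_sumr; apply: ler_sum => i _; exact: Re_ip_le_t.
have h2 : forall m, (\sum_(i <- s) nq (Tm i (x m))) / Bt <= nq (x m).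
  by move=> m; rewrite ler_pdivrMr // mulrC; exact: hbes.
have h3 : \sum_(0 <= m < n) \sum_(i <- s) nq (C i m *: u i) =
    \sum_(i <- s) nq (u i) * nq (y i).
  rewrite exchange_big; apply: eq_big_seq => i hi.
  rewrite [in RHS]/nq {1 2}(hy i hi) parseval // Re_sum mulr_sumr.
  by apply: eq_bigr => m _; rewrite nqZ mulrC.
have h4 : \sum_(i <- s) nq (u i) * nq (y i) <= M * \sum_(i <- s) nq (u i).
  rewrite mulr_sumr; apply: ler_sum_seq' => i hi.
  by rewrite mulrC ler_wpM2r ?nq_ge0 ?hM.
have h5 : 2 * \sum_(0 <= m < n) nq (x m) <=
    Bt * (\sum_(i <- s) nq (u i) * nq (y i)) + \sum_(0 <= m < n) nq (x m).
  rewrite -h3 mulr_sumr mulr_sumr -big_split /=; apply: ler_sum => m _.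
  apply: (le_trans (h1 m)); rewrite big_split /= -mulr_sumr -mulr_suml.
  by rewrite lerD2l h2.
have h6 : Bt * (\sum_(i <- s) nq (u i) * nq (y i)) <= Bt * (M * \sum_(i <- s) nq (u i)).
  by rewrite ler_pM2l.
lra.
Qed.
End Tensor.

Section Usum.
Variable R : realType.

Lemma hnorm_lt (H : Hilbert R) (x : H) (r : R) : 0 < r -> nq x < r ^+ 2 ->
  hnorm x < r%:C.
Proof.
move=> r0 h; rewrite /hnorm /ipnorm ipxx.
have -> : r%:C = sqrtC ((r ^+ 2)%:C).
  by rewrite rmorphXn sqrCK // ler0c ltW.
rewrite ltr_sqrtC ?ltcR // qualifE /= ?ler0c ?nq_ge0 //.
by apply: exprn_ge0; rewrite ltW.
Qed.

Lemma lt_hnorm (H : Hilbert R) (x : H) (eps : R) : 0 < eps ->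
  hnorm x < sqrtC (eps%:C) -> nq x < eps.
Proof.
move=> e0; rewrite /hnorm /ipnorm ipxx ltr_sqrtC ?ltcR // qualifE /= ler0c ?nq_ge0 //.
exact: ltW.
Qed.

Lemma usum_nq (I : eqType) (H : Hilbert R) (A : I -> Prop) (F : I -> H) (s : H) :
  has_usum A F s -> forall eps : R, 0 < eps ->
  exists s0 : seq I, uniq s0 /\ (forall k, k \in s0 -> A k) /\
    forall s1 : seq I, uniq s1 -> (forall k, k \in s1 -> A k) ->
      {subset s0 <= s1} -> nq (\sum_(k <- s1) F k - s) < eps.
Proof.
move=> hu eps e0.
have := hu (sqrtC (eps%:C)); rewrite sqrtC_gt0 ltcR => /(_ e0) [s0 [u0 [h0 h]]].
exists s0; split => // ; split => // s1 u1 h1 sub.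
by apply: lt_hnorm => //; apply: h.
Qed.

Lemma tail (I : int -> Prop) (c : int -> R) (Cb : R) :
  (forall s, uniq s -> (forall k, k \in s -> I k) -> \sum_(i <- s) c i <= Cb) ->
  forall eps, 0 < eps -> exists s0, uniq s0 /\ (forall k, k \in s0 -> I k) /\
   forall s, uniq s -> (forall k, k \in s -> I k) ->
     (forall k, k \in s -> k \notin s0) -> \sum_(i <- s) c i < eps.
Proof.
move=> hC eps e0.
pose E : set R := fun x => exists s, [/\ uniq s, (forall k, k \in s -> I k) & x = \sum_(i <- s) c i].
have hE : has_sup E.
  split; first by exists 0; exists [::]; split => //; rewrite big_nil.
  by exists Cb => x [s [us hs ->]]; apply: hC.
have [x [s0 [us0 hs0 ->]] hx] := sup_adherent e0 hE.
exists s0; split => //; split => // s us hs hdis.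
have : E (\sum_(i <- s0 ++ s) c i).
  exists (s0 ++ s); split => //.
    rewrite cat_uniq us0 us andbT; apply/hasPn => k hk; exact: hdis.
  by move=> k; rewrite mem_cat => /orP[]; [apply: hs0|apply: hs].
move/(sup_upper_bound hE); rewrite big_cat /= => h.
lra.
Qed.
End Usum.

Section Regroup.
Variable R : realType.

Lemma ysum_seq (V : zmodType) (b : int -> V) (s1 : seq (int * int))
  (Q : pred (int * int)) i : uniq s1 ->
  exists Fi : seq int, [/\ uniq Fi,
    (forall j, j \in Fi -> exists p, [/\ p \in s1, Q p & p.2 = j]) &
    \sum_(p <- s1 | Q p && (p.1 == i)) b p.2 = \sum_(j <- Fi) b j].
Proof.
move=> us1; exists [seq p.2 | p <- s1 & Q p && (p.1 == i)]; split.
- rewrite map_inj_in_uniq ?filter_uniq //.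
  move=> [p1 p2] [q1 q2]; rewrite !mem_filter /=.
  by move=> /andP[/andP[_ /eqP ->] _] /andP[/andP[_ /eqP ->] _] /= ->.
- move=> j /mapP [p]; rewrite mem_filter => /andP[/andP[hq _] hp] ->.
  by exists p.
- by rewrite big_map big_filter.
Qed.

Variables H K T : Hilbert R.
Variable tens : H -> K -> T.
Hypothesis hT : is_tensor tens.

Lemma regroup (a : int -> H) (b : int -> K) (s1 : seq (int * int))
  (Q : pred (int * int)) :
  \sum_(p <- s1 | Q p) tens (a p.1) (b p.2) =
  \sum_(i <- undup [seq p.1 | p <- s1 & Q p])
     tens (a i) (\sum_(p <- s1 | Q p && (p.1 == i)) b p.2).
Proof.
symmetry.
rewrite (eq_bigr (fun i => \sum_(p <- s1)
   (if Q p && (p.1 == i) then tens (a p.1) (b p.2) else 0))); last first.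
  move=> i _; rewrite -big_filter (tens_sumr hT) big_filter big_mkcond.
  by apply: eq_bigr => p _; case: ifP => // /andP[_ /eqP ->].
rewrite exchange_big /= [RHS]big_mkcond; apply: eq_big_seq => p hp.
case: (boolP (Q p)) => hq /=; last by rewrite big1.
rewrite (bigD1_seq p.1) ?undup_uniq //=; last first.
  by rewrite mem_undup; apply: map_f; rewrite mem_filter hq.
rewrite eqxx big1 ?addr0 // => i /negbTE; rewrite eq_sym => ->.
by [].
Qed.
End Regroup.

Section Double.
Variable R : realType.
Variables H K T : Hilbert R.
Variable tens : H -> K -> T.
Hypothesis hT : is_tensor tens.

Lemma double_usum (I J : int -> Prop) (Hi Kj : int -> Hilbert R)
 (a : int -> H) (u : forall i, Hi i) (Tm : forall i, H -> Hi i) (Ba Bu : R)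
 (b : int -> K) (z : forall j, Kj j) (Sm : forall j, K -> Kj j) (Bb Bz : R)
 (Ba0 : 0 < Ba) (Bb0 : 0 < Bb)
 (adja : forall i, I i -> forall x, hip (a i) x = hip (u i) (Tm i x))
 (besa : forall s, uniq s -> (forall k, k \in s -> I k) ->
    forall x, \sum_(i <- s) nq (Tm i x) <= Ba * nq x)
 (bu : forall s, uniq s -> (forall k, k \in s -> I k) -> \sum_(i <- s) nq (u i) <= Bu)
 (adjb : forall j, J j -> forall x, hip (b j) x = hip (z j) (Sm j x))
 (besb : forall s, uniq s -> (forall k, k \in s -> J k) ->
    forall x, \sum_(j <- s) nq (Sm j x) <= Bb * nq x)
 (bz : forall s, uniq s -> (forall k, k \in s -> J k) -> \sum_(j <- s) nq (z j) <= Bz)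
 (A : H) (hA : has_usum I a A) (B : K) (hB : has_usum J b B) :
 has_usum (fun p : int * int => I p.1 /\ J p.2)
   (fun p => tens (a p.1) (b p.2)) (tens A B).
Proof.
move=> e e0.
have [er ee] : exists er : R, e = er%:C.
  exists (complex.Re e); move: e0; rewrite ltcE.
  by case: e => re im /= /andP[/eqP -> _].
subst e; have er0 : 0 < er by rewrite -ltcR.
have Bz0 : 0 <= Bz.
  by have := bz [::]; rewrite big_nil; apply => // k; rewrite in_nil.
have Bu0 : 0 <= Bu.
  by have := bu [::]; rewrite big_nil; apply => // k; rewrite in_nil.
pose K0 := 8 + 8 * nq B + 4 * nq A + 4 * (Ba * Bb * Bz) + 4 * (Ba * Bb * Bu).
have K00 : 0 <= K0.
  have := nq_ge0 A; have := nq_ge0 B.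
  have : 0 <= Ba * Bb * Bz by rewrite !mulr_ge0 // ltW.
  have : 0 <= Ba * Bb * Bu by rewrite !mulr_ge0 // ltW.
  rewrite /K0; lra.
pose d := Num.min 1 (er ^+ 2 / (K0 + 1)).
have K01 : 0 < K0 + 1 by lra.
have d0 : 0 < d by rewrite lt_min ltr01 divr_gt0 // exprn_gt0.
have d1 : d <= 1 by rewrite ge_min lexx.
have dK : d * (K0 + 1) <= er ^+ 2.
  by rewrite -ler_pdivlMr // ge_min lexx orbT.
have [sA [uA [hsA hA']]] := usum_nq hA d0.
have [sU [uU [hsU hU]]] := tail (c := fun i => nq (u i)) bu d0.
have [sB [uB [hsB hB']]] := usum_nq hB d0.
have [sZ [uZ [hsZ hZ]]] := tail (c := fun j => nq (z j)) bz d0.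
pose P0 := undup (sA ++ sU); pose Q0 := undup (sB ++ sZ).
have P0I : forall k, k \in P0 -> I k.
  by move=> k; rewrite mem_undup mem_cat => /orP[]; [apply: hsA|apply: hsU].
have Q0J : forall k, k \in Q0 -> J k.
  by move=> k; rewrite mem_undup mem_cat => /orP[]; [apply: hsB|apply: hsZ].
pose s0 := [seq (i, j) | i <- P0, j <- Q0].
have us0 : uniq s0.
  apply: allpairs_uniq; rewrite ?undup_uniq //.
  by move=> [x1 y1] [x2 y2] _ _.
exists s0; split => //; split.
  by move=> k /allpairsP [[i j] [hi hj ->]] /=; split; [apply: P0I|apply: Q0J].
move=> s1 us1 hs1 sub.
apply: hnorm_lt => //=.
have hs1I : forall p, p \in s1 -> I p.1 by move=> p /hs1 [].
have hs1J : forall p, p \in s1 -> J p.2 by move=> p /hs1 [].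
pose in01 := fun p : int * int => (p.1 \in P0) && (p.2 \in Q0).
rewrite (bigID in01) /= -big_filter.
rewrite (perm_big s0); last first.
  apply: uniq_perm; rewrite ?filter_uniq // => -[i j].
  rewrite mem_filter /in01 /=; apply/idP/idP.
    by move=> /andP[/andP[hi hj] _]; apply: allpairs_f.
  move=> hp; rewrite (sub _ hp) andbT.
  by case/allpairsP: hp => -[i' j'] /= [hi hj [-> ->]]; rewrite hi hj.
rewrite big_allpairs /=.
have -> : \sum_(i <- P0) \sum_(j <- Q0) tens (a i) (b j) =
    tens (\sum_(i <- P0) a i) (\sum_(j <- Q0) b j).
  by rewrite (tens_suml hT); apply: eq_bigr => i _; rewrite (tens_sumr hT).
rewrite (bigID (fun p => p.1 \in P0)) /=.
set al := \sum_(i <- P0) a i; set be := \sum_(j <- Q0) b j.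
set X3 := \sum_(p <- s1 | _ && _) _.
set X2 := \sum_(p <- s1 | _ && ~~ _) _.
have -> : tens al be + (X3 + X2) - tens A B = (tens al be - tens A B) + (X3 + X2).
  by rewrite addrAC.
have hx1 : nq (al - A) < d.
  apply: hA'; [exact: undup_uniq | exact: P0I |].
  by move=> k hk; rewrite mem_undup mem_cat hk.
have hx2 : nq (be - B) < d.
  apply: hB'; [exact: undup_uniq | exact: Q0J |].
  by move=> k hk; rewrite mem_undup mem_cat hk.
have hnb : nq be <= 2 * nq (be - B) + 2 * nq B.
  by have := nq_add_le (be - B) B; rewrite subrK.
have hX1 : nq (tens al be - tens A B) <=
    2 * (nq (al - A) * nq be) + 2 * (nq A * nq (be - B)).
  have -> : tens al be - tens A B = tens (al - A) be + tens A (be - B).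
    by rewrite (tensBl hT) (tensBr hT) addrA subrK.
  by rewrite -!(nq_tens hT); apply: nq_add_le.
have hX2 : nq X2 <= Ba * (Bb * Bz) * d.
  rewrite /X2 (regroup hT).
  set U2 := undup _.
  have uU2 : uniq U2 := undup_uniq _.
  have hU2 : forall i, i \in U2 -> exists p,
      [/\ p \in s1, ~~ in01 p && ~~ (p.1 \in P0) & p.1 = i].
    move=> i; rewrite mem_undup => /mapP [p]; rewrite mem_filter => /andP[hq hp] ->.
    by exists p.
  have U2I : forall i, i \in U2 -> I i.
    by move=> i /hU2 [p [hp _ <-]]; exact: hs1I.
  apply: (le_trans (key hT (u := u) (y := fun i => \sum_(p <- s1 | (~~ in01 p && ~~ (p.1 \in P0)) && (p.1 == i)) b p.2) (M := Bb * Bz) Ba0 _ (besa U2 uU2 U2I) _)).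
  - by move=> i hi; apply: adja; apply: U2I.
  - move=> i hi.
    have [Fi [uFi hFi ->]] := ysum_seq b (fun p => ~~ in01 p && ~~ (p.1 \in P0)) i us1.
    have FiJ : forall j, j \in Fi -> J j.
      by move=> j /hFi [p [hp _ <-]]; exact: hs1J.
    apply: (le_trans (synth Bb0 _ (besb Fi uFi FiJ))).
      by move=> j hj; apply: adjb; apply: FiJ.
    by apply: ler_wpM2l; [exact: ltW | exact: bz].
  - apply: ler_wpM2l; first by rewrite !mulr_ge0 // ltW.
    apply: ltW; apply: hU => // k /hU2 [p [hp /andP[_ hn] <-]].
    by apply: contra hn => hk; rewrite mem_undup mem_cat hk orbT.
have hX3 : nq X3 <= Ba * (Bb * d) * Bu.
  rewrite /X3 (regroup hT).
  set U3 := undup _.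
  have uU3 : uniq U3 := undup_uniq _.
  have hU3 : forall i, i \in U3 -> exists p,
      [/\ p \in s1, ~~ in01 p && (p.1 \in P0) & p.1 = i].
    move=> i; rewrite mem_undup => /mapP [p]; rewrite mem_filter => /andP[hq hp] ->.
    by exists p.
  have U3I : forall i, i \in U3 -> I i.
    by move=> i /hU3 [p [hp _ <-]]; exact: hs1I.
  apply: (le_trans (key hT (u := u) (y := fun i => \sum_(p <- s1 | (~~ in01 p && (p.1 \in P0)) && (p.1 == i)) b p.2) (M := Bb * d) Ba0 _ (besa U3 uU3 U3I) _)).
  - by move=> i hi; apply: adja; apply: U3I.
  - move=> i hi.
    have [Fi [uFi hFi ->]] := ysum_seq b (fun p => ~~ in01 p && (p.1 \in P0)) i us1.
    have FiJ : forall j, j \in Fi -> J j.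
      by move=> j /hFi [p [hp _ <-]]; exact: hs1J.
    apply: (le_trans (synth Bb0 _ (besb Fi uFi FiJ))).
      by move=> j hj; apply: adjb; apply: FiJ.
    apply: ler_wpM2l; first exact: ltW.
    apply: ltW; apply: hZ => // j /hFi [p [hp hq <-]].
    case/andP: hq => h01 h1.
    have h2 : p.2 \notin Q0 by move: h01; rewrite /in01 h1.
    by apply: contra h2 => hk; rewrite mem_undup mem_cat hk orbT.
  - by apply: ler_wpM2l; [rewrite !mulr_ge0 // ltW | apply: bu].
have hsum : nq (tens al be - tens A B + (X3 + X2)) <=
    2 * nq (tens al be - tens A B) + 4 * nq X3 + 4 * nq X2.
  have := nq_add_le (tens al be - tens A B) (X3 + X2).
  have := nq_add_le X3 X2; lra.
have t1 : nq (al - A) * nq be <= d * (2 + 2 * nq B).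
  apply: ler_pM; [exact: nq_ge0 | exact: nq_ge0 | exact: ltW |].
  have := nq_ge0 B; lra.
have t2 : nq A * nq (be - B) <= nq A * d.
  by apply: ler_wpM2l; [exact: nq_ge0 | exact: ltW].
have fin : 2 * (2 * (d * (2 + 2 * nq B)) + 2 * (nq A * d)) +
    4 * (Ba * (Bb * d) * Bu) + 4 * (Ba * (Bb * Bz) * d) = d * K0.
  by rewrite /K0; ring.
have dK0 : d * K0 < er ^+ 2.
  apply: lt_le_trans dK; rewrite ltr_pM2l //; lra.
lra.
Qed.
End Double.

Section Final.
Variable R : realType.

Lemma CM (x y : R) : x%:C * y%:C = (x * y)%:C :> R[i].
Proof. by apply/eqP; rewrite eq_complex /= !mulr0 !mul0r subr0 addr0 !eqxx. Qed.

Lemma proj_sa (H : Hilbert R) (V : H -> Prop) (P : H -> H) :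
  is_orth_proj V P -> forall x y, hip (P x) y = hip x (P y).
Proof.
move=> hP x y; have [Vx hx] := hP x; have [Vy hy] := hP y.
have e1 : hip (P x) (y - P y) = 0 by rewrite ipC (hy _ Vx) rmorph0.
have e2 : hip (x - P x) (P y) = 0 := hx _ Vy.
move: e1 e2; rewrite ipBr ipBl => /eqP e1 /eqP e2.
move: e1 e2; rewrite !subr_eq0 => /eqP -> /eqP ->.
by [].
Qed.

Lemma adj_tens (H K T H2 K2 T2 : Hilbert R) (tens : H -> K -> T)
  (tens2 : H2 -> K2 -> T2) (hT : is_tensor tens) (hT2 : is_tensor tens2)
  (L : H -> H2) (G : K -> K2) (Ls : H2 -> H) (Gs : K2 -> K)
  (LG : T -> T2) (LGs : T2 -> T) :
  is_adjoint L Ls -> is_adjoint G Gs -> is_op_tensor tens tens2 L G LG ->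
  is_adjoint LG LGs -> forall p q, LGs (tens2 p q) = tens (Ls p) (Gs q).
Proof.
move=> hL hG [_ hLG] hLGs p q.
set dd := LGs (tens2 p q) - tens (Ls p) (Gs q).
have orth : forall x y, hip (tens x y) dd = 0.
  move=> x y; rewrite ipBr -hLGs hLG (tens_ip hT2) (tens_ip hT) hL hG.
  by rewrite subrr.
have small : forall eps : R, 0 < eps -> nq dd < eps.
  move=> eps e0; case: hT => _ _ _ hd.
  have [s hs] := hd dd (sqrtC (eps%:C)) (ltac:(by rewrite sqrtC_gt0 ltcR)).
  set S := \sum_(pp <- s) _ in hs.
  have hS : hip S dd = 0.
    by rewrite /S ip_suml big1 // => pp _; rewrite ipZl orth mulr0.
  have h1 := lt_hnorm e0 hs.
  have h2 : complex.Re (hip (dd - S) S) = - nq S.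
    by rewrite ipBl ipC hS rmorph0 sub0r /nq; case: (hip S S).
  have := nqD (dd - S) S; rewrite subrK h2 => ->.
  have := nq_ge0 S; lra.
have : nq dd = 0.
  apply/eqP; rewrite eq_le nq_ge0 andbT; apply/negP => /negP; rewrite -ltNge => h.
  have := small (nq dd / 2) (ltac:(by rewrite divr_gt0)); lra.
move/nq_eq0/eqP; rewrite subr_eq0 => /eqP.
by [].
Qed.

Lemma usum_ext (I : eqType) (H : Hilbert R) (A : I -> Prop) (F G : I -> H) (s : H) :
  (forall k, A k -> F k = G k) -> has_usum A F s -> has_usum A G s.
Proof.
move=> h hu e e0; have [s0 [u0 [h0 hh]]] := hu e e0.
exists s0; split => //; split => // s1 u1 h1 sub.
rewrite (eq_big_seq F); first exact: hh.
by move=> k hk; rewrite h //; apply: h1.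
Qed.

Lemma bessel_nq (I : int -> Prop) (H : Hilbert R) (Hi : int -> Hilbert R)
  (PV : int -> H -> H) (L : forall i : int, H -> Hi i) (v : int -> R) :
  gfusion_bessel I PV L v -> exists Br : R, 0 < Br /\
   forall s, uniq s -> (forall k, k \in s -> I k) ->
     forall f, \sum_(i <- s) nq ((v i)%:C *: L i (PV i f)) <= Br * nq f.
Proof.
move=> [B [B0 hB]].
have [Br eB] : exists Br : R, B = Br%:C.
  exists (complex.Re B); move: B0; rewrite ltcE.
  by case: B {hB} => re im /= /andP[/eqP -> _].
subst B; exists Br; split; first by rewrite -ltcR.
move=> s us hs f; have := hB f s us hs.
have hn : forall (K : Hilbert R) (x : K), hnorm x ^+ 2 = (nq x)%:C.
  by move=> K x; rewrite /hnorm /ipnorm sqrtCK ipxx.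
rewrite hn (eq_bigr (fun i => ((v i ^+ 2) * nq (L i (PV i f)))%:C)); last first.
  by move=> i _; rewrite hn CM.
rewrite -rmorph_sum -rmorphM lecR.
by move=> h; rewrite (eq_bigr _ (fun i _ => nqZr _ _)).
Qed.
End Final.

Unset Implicit Arguments.

Theorem theorem4p2 (R : realType)
  (I J : int -> Prop)
  (H K : Hilbert R) (sepH : separable H) (sepK : separable K)
  (Hi : int -> Hilbert R) (Kj : int -> Hilbert R)
  (* closed subspaces and their orthogonal projections *)
  (V V' : int -> H -> Prop) (W W' : int -> K -> Prop)
  (PV PV' : int -> H -> H) (PW PW' : int -> K -> K)
  (hV : forall i, I i -> closed_subspace (V i) /\ is_orth_proj (V i) (PV i))
  (hV' : forall i, I i -> closed_subspace (V' i) /\ is_orth_proj (V' i) (PV' i))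
  (hW : forall j, J j -> closed_subspace (W j) /\ is_orth_proj (W j) (PW j))
  (hW' : forall j, J j -> closed_subspace (W' j) /\ is_orth_proj (W' j) (PW' j))
  (* operators Lambda_i, Lambda_i', Gamma_j, Gamma_j' and adjoints *)
  (L L' : forall i : int, H -> Hi i) (G G' : forall j : int, K -> Kj j)
  (hL : forall i, I i -> bounded_linear (L i) /\ bounded_linear (L' i))
  (hG : forall j, J j -> bounded_linear (G j) /\ bounded_linear (G' j))
  (Lstar : forall i : int, Hi i -> H) (Gstar : forall j : int, Kj j -> K)
  (hLstar : forall i, I i -> is_adjoint (L i) (Lstar i))
  (hGstar : forall j, J j -> is_adjoint (G j) (Gstar j))
  (* positive weights *)
  (v v' w w' : int -> R)
  (hv : forall i, I i -> 0 < v i /\ 0 < v' i)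
  (hw : forall j, J j -> 0 < w j /\ 0 < w' j)
  (* g-fusion Bessel sequences *)
  (bL : gfusion_bessel I PV L v) (bL' : gfusion_bessel I PV' L' v')
  (bG : gfusion_bessel J PW G w) (bG' : gfusion_bessel J PW' G' w')
  (* frame operators S_{Lambda Lambda'} and S_{Gamma Gamma'} *)
  (SL : H -> H) (SG : K -> K)
  (hSL : forall f : H, has_usum I
          (fun i => (v i * v' i)%:C *: PV i (Lstar i (L' i (PV' i f)))) (SL f))
  (hSG : forall g : K, has_usum J
          (fun j => (w j * w' j)%:C *: PW j (Gstar j (G' j (PW' j g)))) (SG g))
  (* tensor products H (x) K and H_i (x) K_j *)
  (T : Hilbert R) (tens : H -> K -> T) (hT : is_tensor tens)
  (TT : int -> int -> Hilbert R) (ttens : forall i j, Hi i -> Kj j -> TT i j)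
  (hTT : forall i j, I i -> J j -> is_tensor (ttens i j))
  (* Lambda_i (x) Gamma_j, Lambda_i' (x) Gamma_j', and the adjoint of the former *)
  (LG LG' : forall i j : int, T -> TT i j)
  (hLG : forall i j, I i -> J j -> is_op_tensor tens (ttens i j) (L i) (G j) (LG i j))
  (hLG' : forall i j, I i -> J j -> is_op_tensor tens (ttens i j) (L' i) (G' j) (LG' i j))
  (LGstar : forall i j : int, TT i j -> T)
  (hLGstar : forall i j, I i -> J j -> is_adjoint (LG i j) (LGstar i j))
  (* P_{V_i (x) W_j} = P_{V_i} (x) P_{W_j}, and likewise for the primed ones *)
  (PVW PVW' : int -> int -> T -> T)
  (hPVW : forall i j, I i -> J j -> is_op_tensor tens tens (PV i) (PW j) (PVW i j))
  (hPVW' : forall i j, I i -> J j -> is_op_tensor tens tens (PV' i) (PW' j) (PVW' i j))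
  (* S_{Lambda Lambda'} (x) S_{Gamma Gamma'} *)
  (X : T -> T) (hX : is_op_tensor tens tens SL SG X) :
  (* S (f (x) g) = (S_{Lambda Lambda'} (x) S_{Gamma Gamma'}) (f (x) g) *)
  forall (f : H) (g : K),
    has_usum (fun p : int * int => I p.1 /\ J p.2)
      (fun p : int * int =>
         (v p.1 * w p.2 * v' p.1 * w' p.2)%:C *:
           PVW p.1 p.2 (LGstar p.1 p.2 (LG' p.1 p.2 (PVW' p.1 p.2 (tens f g)))))
      (X (tens f g)).
Proof.
move=> f g.
have [Ba [Ba0 besa]] := bessel_nq bL.
have [Ba' [Ba0' besa']] := bessel_nq bL'.
have [Bb [Bb0 besb]] := bessel_nq bG.
have [Bb' [Bb0' besb']] := bessel_nq bG'.
case: hX => _ hXt; rewrite hXt.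
pose a i := (v i * v' i)%:C *: PV i (Lstar i (L' i (PV' i f))).
pose b j := (w j * w' j)%:C *: PW j (Gstar j (G' j (PW' j g))).
apply: (usum_ext (F := fun p : int * int => tens (a p.1) (b p.2))).
  move=> [i j] [/= hi hj].
  have [_ h1] := hPVW' i j hi hj; have [_ h2] := hLG' i j hi hj.
  have [_ h3] := hPVW i j hi hj.
  rewrite h1 h2 (adj_tens hT (hTT i j hi hj) (hLstar i hi) (hGstar j hj)
    (hLG i j hi hj) (hLGstar i j hi hj)) h3.
  rewrite /a /b (tensZl hT) (tensZr hT) scalerA CM; congr (_%:C *: _); ring.
apply: (double_usum hT (u := fun i => (v' i)%:C *: L' i (PV' i f))
  (Tm := fun i x => (v i)%:C *: L i (PV i x))
  (z := fun j => (w' j)%:C *: G' j (PW' j g))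
  (Sm := fun j x => (w j)%:C *: G j (PW j x)) Ba0 Bb0).
- move=> i hi x /=.
  rewrite /a ipZl (proj_sa (hV i hi).2) (ipC (PV i x)) -(hLstar i hi) -ipC.
  by rewrite ipZl ipZrR -CM; ring.
- by move=> s us hs x; exact: besa s us hs x.
- by move=> s us hs; exact: besa' s us hs f.
- move=> j hj x /=.
  rewrite /b ipZl (proj_sa (hW j hj).2) (ipC (PW j x)) -(hGstar j hj) -ipC.
  by rewrite ipZl ipZrR -CM; ring.
- by move=> s us hs x; exact: besb s us hs x.
- by move=> s us hs; exact: besb' s us hs g.
- exact: hSL f.
- exact: hSG g.
Qed.
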